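(* For $n\ge 2$ and $k\ge 3$, \[a_{n,k}(213) = \sum_{j=2}^{n} b_{j,k}(213)\,a_{n+1-j,k}(213),\] where $a_{n,k}(213)$ is the number of cyclic permutations $\pi\in\mathfrak S_n$ whose one-line notation avoids $\delta_k=k(k-1)\cdots21$ and whose cycle form $C(\pi)$ avoids $213$, and $b_{n,k}(213)$ is the number of such permutations that additionally satisfy $\pi_1=n$.
   Context: A permutation $\pi\in\mathfrak S_n$ is cyclic if it consists of a single $n$-cycle. For cyclic $\pi$, $C(\pi)=(1,c_2,\dots,c_n)$ with $c_2=\pi(1)$, $c_{i+1}=\pi(c_i)$, viewed as the sequence $1c_2\cdots c_n$ for pattern avoidance. A sequence avoids a pattern $\sigma\in\mathfrak S_m$ if no subsequence of length $m$ is in the same relative order as $\sigma$. The one-line notation of $\pi$ is $\pi_1\cdots\pi_n$, $\pi_i=\pi(i)$. *)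

(* Defs.v *)
From mathcomp Require Import all_boot all_fingroup.
Set Implicit Arguments. Unset Strict Implicit. Unset Printing Implicit Defensive.

(* Conventions: permutations of {1..n} are modelled as 'S_n = {perm 'I_n},
   with value i+1 represented by i (0-indexed). Pattern avoidance only
   depends on relative order, so the shift is harmless. *)

Definition same_order (s t : seq nat) : bool :=
  (size s == size t) &&
  [forall i : 'I_(size s), forall j : 'I_(size s),
     (nth 0 s i < nth 0 s j) == (nth 0 t i < nth 0 t j)].

Definition contains (p s : seq nat) : bool :=
  [exists m : (size s).-tuple bool, same_order (mask m s) p].

Definition avoids (p s : seq nat) : bool := ~~ contains p s.

Definition one_line n (s : 'S_n) : seq nat := [seq val (s i) | i <- enum 'I_n].

Definition cyclic_perm n (s : 'S_n) : bool :=
  [forall x : 'I_n, #|porbit s x| == n].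

(* cycle form C(pi) = (1, pi(1), pi^2(1), ..., ) of length n, starting at 1 (= 0 here) *)
Definition cycle_form n (s : 'S_n) : seq nat :=
  match n return 'S_n -> seq nat with
  | 0 => fun _ => [::]
  | m.+1 => fun s => [seq val x | x <- traject s (ord0 : 'I_m.+1) m.+1]
  end s.

Definition delta (k : nat) : seq nat := rev (iota 0 k).

Definition pat213 : seq nat := [:: 1; 0; 2].

Definition good n k (s : 'S_n) : bool :=
  [&& cyclic_perm s, avoids (delta k) (one_line s) & avoids pat213 (cycle_form s)].

Definition a_nk (n k : nat) : nat := #|[set s : 'S_n | good k s]|.

Definition b_nk (n k : nat) : nat :=
  #|[set s : 'S_n | good k s &&
       (match n return 'S_n -> bool with
        | 0 => fun _ => false
        | m.+1 => fun s => val (s ord0) == m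
        end s)]|.

(* Main.v *)
Require Import Defs.
From mathcomp Require Import all_boot all_fingroup zify.
Set Implicit Arguments. Unset Strict Implicit. Unset Printing Implicit Defensive.

Definition decr (t : seq nat) := sorted (fun a b => b < a) t.

Lemma decr_tr : transitive (fun a b : nat => b < a).
Proof. by move=> y x z H1 H2; exact: ltn_trans H2 H1. Qed.

Lemma containsP p s : contains p s <-> exists t, subseq t s /\ same_order t p.
Proof.
split.
- case/existsP => m H; exists (mask m s); split => //; exact: mask_subseq.
- move=> [t [/subseqP [m Hm ->] H]]; apply/existsP.
  by exists (@Tuple _ _ m (introT eqP Hm)).
Qed.

Lemma so_delta t k : same_order t (delta k) = (size t == k) && decr t.
Proof.
have Hs : size (delta k) = k by rewrite /delta size_rev size_iota.
have Hn : forall i, i < k -> nth 0 (delta k) i = k - i.+1.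
  by move=> i Hi; rewrite /delta nth_rev size_iota // nth_iota //; lia.
rewrite /same_order Hs /decr sorted_pairwise; last exact: decr_tr.
apply/idP/idP.
- case/andP => /eqP Hk /forallP H; rewrite Hk eqxx /=.
  apply/(pairwiseP 0) => i j; rewrite !inE => Hi Hj Hij.
  have := forallP (H (Ordinal Hj)) (Ordinal Hi) => /=.
  rewrite !Hn -?Hk //; move/eqP => ->; lia.
- case/andP => /eqP Hk /(pairwiseP 0) H0; rewrite Hk eqxx /=.
  have H : forall i j, i < k -> j < k -> i < j -> nth 0 t j < nth 0 t i.
    by move=> i j ? ? ?; apply: H0; rewrite ?inE ?Hk.
  apply/forallP => i; apply/forallP => j; rewrite !Hn -?Hk //.
  have Hi := ltn_ord i; have Hj := ltn_ord j.
  case: (ltngtP i j) => Hij.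
  + have := H i j Hi Hj Hij => /= ?; apply/eqP; lia.
  + have := H j i Hj Hi Hij => /= ?; apply/eqP; lia.
  + move: Hij Hi => ->{i} Hi; by rewrite !ltnn.
Qed.

Lemma so_213 t : same_order t pat213 <-> exists x y z, t = [:: x; y; z] /\ y < x < z.
Proof.
split.
- case: t => [|x [|y [|z [|w t]]]] //= /andP [_ /forallP H].
  exists x, y, z; split => //.
  have := forallP (H (@Ordinal 3 0 isT)) (@Ordinal 3 1 isT) => /= /eqP H01.
  have := forallP (H (@Ordinal 3 0 isT)) (@Ordinal 3 2 isT) => /= /eqP H02.
  have := forallP (H (@Ordinal 3 1 isT)) (@Ordinal 3 0 isT) => /= /eqP H10.
  lia.
- move=> [x [y [z [-> H]]]]; rewrite /same_order /=.
  apply/forallP => -[[|[|[|i]]] Hi] //; apply/forallP => -[[|[|[|j]]] Hj] //=;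
  apply/eqP; lia.
Qed.

Definition cD k (s : seq nat) := exists t, subseq t s /\ size t = k /\ decr t.
Definition c213 (s : seq nat) := exists x y z, subseq [:: x; y; z] s /\ y < x < z.

Lemma cDP k s : contains (delta k) s <-> cD k s.
Proof.
rewrite containsP; split.
- by move=> [t [Hs]]; rewrite so_delta => /andP [/eqP Hk Hd]; exists t.
- by move=> [t [Hs [Hk Hd]]]; exists t; split => //; rewrite so_delta Hk eqxx.
Qed.

Lemma c213P s : contains pat213 s <-> c213 s.
Proof.
rewrite containsP; split.
- move=> [t [Hs /so_213 [x [y [z [Ht H]]]]]]; exists x, y, z; by rewrite -Ht.
- move=> [x [y [z [Hs H]]]]; exists [:: x; y; z]; split => //; apply/so_213.
  by exists x, y, z.
Qed.

Lemma subseq_catP (T : eqType) (t s1 s2 : seq T) : subseq t (s1 ++ s2) ->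
  exists t1 t2, t = t1 ++ t2 /\ subseq t1 s1 /\ subseq t2 s2.
Proof.
move=> /subseqP [m Hm ->].
have Hs : size (take (size s1) m) = size s1 by rewrite size_takel // Hm size_cat leq_addr.
exists (mask (take (size s1) m) s1), (mask (drop (size s1) m) s2).
by rewrite -mask_cat // cat_take_drop !mask_subseq.
Qed.

Lemma subseq_mapP (T1 T2 : eqType) (f : T1 -> T2) t s : subseq t (map f s) ->
  exists t', t = map f t' /\ subseq t' s.
Proof.
move=> /subseqP [m Hm ->]; exists (mask m s); split; last exact: mask_subseq.
by rewrite map_mask.
Qed.

Lemma decr_map f t : (forall x y, (f x < f y) = (x < y)) -> decr (map f t) = decr t.
Proof.
move=> Hf; rewrite /decr sorted_map; case: t => //= a t.
by apply: eq_path => x y /=; exact: Hf.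
Qed.

Section Glue.
Variables (m v : nat).
Definition hh (x : nat) := if x == 0 then v else x + m.

Lemma hh_mono : v <= m -> forall x y, (hh x < hh y) = (x < y).
Proof. by move=> Hv x y; rewrite /hh; case: eqP => Hx; case: eqP => Hy; lia. Qed.

Lemma cD_glue k A T : all (fun x => x <= m) A -> v <= m -> 0 \in T ->
  cD k (A ++ map hh T) <-> cD k (rcons A v) \/ cD k T.
Proof.
move=> HA Hv HT; split.
- move=> [t [Hs [Hk Hd]]].
  have [t1 [t2 [Et [H1 H2]]]] := subseq_catP Hs.
  have [t2' [Et2 H2']] := subseq_mapP H2.
  case: t1 Et H1 => [|a t1] Et H1.
  + right; exists t2'; split => //; rewrite Et /= Et2 size_map decr_map in Hk Hd *;
      last exact: hh_mono.
    by split.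
  + left.
    have Ha : a <= m by have := allP HA a (mem_subseq H1 (mem_head _ _)).
    move: (Hd); rewrite Et /decr sorted_pairwise; last exact: decr_tr.
    rewrite pairwise_cat => /and3P [Hr _ Hp2].
    have Hlt : forall u, u \in t2' -> u = 0.
      move=> u Hu; have := allrelP Hr a (hh u) (mem_head _ _).
      rewrite Et2 map_f // => /(_ isT); rewrite /hh; case: eqP => //; lia.
    have Ht2 : t2 = [::] \/ t2 = [:: v].
      case: t2' Et2 H2' Hlt Hp2 => [|u [|w r]] -> H2' Hlt Hp2; first by left.
      * by right; rewrite /= /hh (Hlt u (mem_head _ _)).
      * have Hu := Hlt u (mem_head _ _).
        have Hw : w = 0 by apply: Hlt; rewrite !inE eqxx orbT.
        move: Hp2; rewrite /= /hh Hu Hw /=; by rewrite ltnn.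
    exists t; split; last by split.
    rewrite Et -cats1; apply: cat_subseq => //.
    by case: Ht2 => ->; rewrite ?sub0seq ?subseq_refl.
- case=> [[t [Hs [Hk Hd]]]|[t [Hs [Hk Hd]]]].
  + exists t; split => //.
    move: Hs; rewrite -cats1 => /subseq_catP [t1 [t2 [Et [H1 H2]]]].
    rewrite Et; apply: cat_subseq => //.
    case: t2 H2 {Et} => [|u [|w r]] H2; rewrite ?sub0seq //.
    * rewrite sub1seq; have := mem_subseq H2 (mem_head _ _); rewrite inE => /eqP ->.
      by apply/mapP; exists 0 => //; rewrite /hh eqxx.
    * by have := size_subseq H2.
  + exists (map hh t); split; last by rewrite size_map decr_map //; exact: hh_mono.
    apply: subseq_trans (suffix_subseq _ _); exact: map_subseq.
Qed.
End Glue.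

Lemma c213_sub s1 s2 : subseq s1 s2 -> c213 s1 -> c213 s2.
Proof. move=> H [x [y [z [Hs Hl]]]]; exists x, y, z; split => //; exact: subseq_trans H. Qed.

Lemma c213_head a s : (forall u, u \in s -> a < u) \/ (forall u, u \in s -> u < a) ->
  c213 (a :: s) <-> c213 s.
Proof.
move=> Ha; split; last exact: c213_sub (subseq_cons _ _).
move=> [x [y [z [Hs Hl]]]]; move: Hs => /=; case: eqP => [Ex|_] Hs; last by exists x, y, z.
have Hy := mem_subseq Hs (mem_head _ _).
have Hz : z \in s by apply: (mem_subseq Hs); rewrite !inE eqxx orbT.
case: Ha => H; [have := H _ Hy | have := H _ Hz]; lia.
Qed.

Lemma c213_cat m B S : (forall u, u \in B -> m < u) -> (forall u, u \in S -> u < m) ->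
  c213 (B ++ S) <-> c213 B \/ c213 S.
Proof.
move=> HB HS; split.
- move=> [x [y [z [/subseq_catP [t1 [t2 [Et [H1 H2]]]] Hl]]]].
  case: t1 Et H1 => [|a [|b [|c [|d t1]]]] //= Et H1.
  + by right; exists x, y, z; rewrite Et.
  + case: Et => Ea Et; subst a; have := HB _ (mem_subseq H1 (mem_head _ _)).
    have : z \in S by apply: (mem_subseq H2); rewrite -Et !inE eqxx orbT.
    move/HS; lia.
  + case: Et => Ea Eb Et; subst a b; have := HB _ (mem_subseq H1 (mem_head _ _)).
    have : z \in S by apply: (mem_subseq H2); rewrite -Et !inE eqxx.
    move/HS; lia.
  + case: Et => Ea Eb Ec Et; left; exists x, y, z; split => //.
    by rewrite Ea Eb Ec.
- case=> [H|H]; apply: c213_sub H; [exact: prefix_subseq | exact: suffix_subseq].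
Qed.

Lemma c213_map m s : c213 (map (addn m) s) <-> c213 s.
Proof.
split.
- move=> [x [y [z [/subseq_mapP [t' [Et Hs]] Hl]]]].
  case: t' Et Hs => [|a [|b [|c [|d t']]]] //= [Ea Eb Ec] Hs; subst.
  exists a, b, c; split => //; lia.
- move=> [x [y [z [Hs Hl]]]]; exists (m + x), (m + y), (m + z); split; last lia.
  by have := map_subseq (addn m) Hs.
Qed.

Lemma c213_split m r : m \notin r -> ~ c213 (m :: r) ->
  r = filter (fun u => m < u) r ++ filter (fun u => u < m) r.
Proof.
elim: r => [|a r IH] //= Hm Hc.
rewrite inE negb_or in Hm; case/andP: Hm => Hma Hm.
have Hsub : subseq (m :: r) (m :: a :: r).
  by rewrite -cat1s -[m :: a :: r]cat1s subseq_cat2l subseq_cons.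
have IH' := IH Hm (fun H => Hc (c213_sub Hsub H)).
case: (ltngtP m a) => Ha /=.
- by rewrite -IH'.
- have Hall : forall u, u \in r -> u < m.
    move=> u Hu; case: (ltngtP u m) => // Hu'.
    + exfalso; apply: Hc; exists m, a, u; split; last lia.
      by rewrite /= eqxx /= eqxx; rewrite sub1seq.
    + by move: Hm; rewrite -Hu' Hu.
  rewrite (eq_in_filter (a2 := pred0)); last by move=> u /Hall Hu /=; apply/negbTE; lia.
  rewrite filter_pred0 /=; congr (_ :: _).
  by rewrite (eq_in_filter (a2 := predT)) ?filter_predT // => u /Hall.
- by move: Hma; rewrite Ha eqxx.
Qed.

Definition succ (c : seq nat) x := nth 0 (rot 1 c) (index x c).
Definition OLs (c : seq nat) := [seq succ c i | i <- iota 0 (size c)].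
Definition iscf n (c : seq nat) := perm_eq c (iota 0 n) && (head 0 c == 0).
Definition goodseq k (c : seq nat) := avoids (delta k) (OLs c) && avoids pat213 c.

Lemma succ_cons a s x : succ (a :: s) x = nth 0 (rcons s a) (index x (a :: s)).
Proof. by rewrite /succ rot1_cons. Qed.

Lemma map_succ c : uniq c -> map (succ c) c = rot 1 c.
Proof.
move=> Hu; apply: (@eq_from_nth _ 0); first by rewrite size_map size_rot.
move=> i; rewrite size_map => Hi.
by rewrite (nth_map 0) // /succ index_uniq.
Qed.

Lemma OLs_perm n c : iscf n c -> perm_eq (OLs c) (iota 0 n).
Proof.
case/andP => Hp _; have Hu : uniq c by rewrite (perm_uniq Hp) iota_uniq.
have Hs : size c = n by rewrite (perm_size Hp) size_iota.
have Hp2 : perm_eq (iota 0 n) c by rewrite perm_sym.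
rewrite /OLs Hs; apply: (perm_trans (perm_map (succ c) Hp2)).
by rewrite map_succ // perm_rot.
Qed.

Section GlueSeq.
Variables (m : nat) (S B' : seq nat).
Hypotheses (Hm : 0 < m) (HS : forall x, x \in S -> 0 < x < m)
  (HB : forall y, y \in B' -> 0 < y).

Let c := 0 :: m :: (map (addn m) B' ++ S).
Let sg := 0 :: m :: S.
Let tu := 0 :: B'.

Lemma succ_glue_low x : x < m -> (x = 0 \/ x \in S) -> succ c x = succ sg x.
Proof.
move=> Hx Hx'; rewrite /c /sg !succ_cons.
case: Hx' => [->|HxS]; first by [].
have Hx0 : (0 == x) = false by apply/negbTE; have := HS HxS; lia.
have Hxm : (m == x) = false by apply/negbTE; have := HS HxS; lia.
have HxB : x \notin map (addn m) B' by apply/mapP => -[y /HB Hy E]; lia.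
rewrite /= Hx0 Hxm index_cat (negbTE HxB) -!cats1 /=.
rewrite -catA nth_cat size_map.
have -> : ((size B' + index x S).+1 < size B') = false by apply/negbTE; lia.
by rewrite -addnS addKn.
Qed.

Lemma succ_glue_high y : y <= size B' -> (y = 0 \/ y \in B') ->
  succ c (m + y) = hh m (succ sg m) (succ tu y).
Proof.
move=> Hy Hy'; rewrite /c /sg /tu !succ_cons.
have Hm0 : (0 == m) = false by apply/negbTE; lia.
case: Hy' => [->|HyB].
- rewrite addn0 /= Hm0 eqxx /=.
  case: B' HB => [|b B''] HB' /=; first by rewrite /hh.
  have Hb := HB' b (mem_head _ _); rewrite /hh.
  have -> : (b == 0) = false by apply/negbTE; lia.
  by rewrite addnC.
- have Hy0 : y != 0 by have := HB HyB; lia.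
  have Hmy0 : (0 == m + y) = false by apply/negbTE; lia.
  have Hmym : (m == m + y) = false by apply/negbTE; lia.
  have Hy0' : (0 == y) = false by apply/negbTE; lia.
  have HmyB : m + y \in map (addn m) B' by apply: map_f.
  rewrite /= Hmy0 Hmym Hy0' index_cat HmyB.
  rewrite index_map; last exact: addnI.
  have Hi : index y B' < size B' by rewrite index_mem.
  rewrite /= -cats1 -catA nth_cat size_map /= nth_rcons.
  rewrite Hm0 eqxx /=.
  case: ltnP => Hlt.
  + rewrite (nth_map 0) //.
    have Hnz : (nth 0 B' (index y B').+1 == 0) = false.
      by apply/negbTE; rewrite -lt0n; apply: HB; exact: mem_nth.
    by rewrite /hh Hnz addnC.
  + have E : (index y B').+1 = size B' by lia.
    by rewrite E subnn eqxx /hh eqxx -cats1.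
Qed.

Lemma OLs_glue : (forall x, 0 < x < m -> x \in S) ->
  (forall y, 0 < y <= size B' -> y \in B') -> size S = m.-1 ->
  OLs c = map (succ sg) (iota 0 m) ++ map (hh m (succ sg m)) (OLs tu).
Proof.
move=> HS2 HB2 Hsz; rewrite {1}/OLs.
have -> : size c = m + size tu by rewrite /c /tu /= size_cat size_map Hsz; lia.
rewrite iotaD map_cat; congr (_ ++ _).
- apply/eq_in_map => x; rewrite mem_iota; case/andP => _ Hx.
  apply: succ_glue_low => //; case: (posnP x) => Hx0; [by left | right; apply: HS2; lia].
- rewrite add0n -{1}(addn0 m) iotaDl /OLs -!map_comp.
  apply/eq_in_map => y; rewrite mem_iota /tu /= => Hy /=.
  apply: succ_glue_high; first lia.
  case: (posnP y) => Hy0; [by left | right; apply: HB2; lia].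
Qed.
End GlueSeq.

Lemma c213_head2 a s : (forall y z, subseq [:: y; z] s -> ~ (y < a < z)) ->
  c213 (a :: s) <-> c213 s.
Proof.
move=> Ha; split; last exact: c213_sub (subseq_cons _ _).
move=> [x [y [z [Hs Hl]]]]; move: Hs => /=; case: eqP => [Ex|_] Hs; last by exists x, y, z.
by exfalso; apply: (Ha y z Hs); rewrite -Ex.
Qed.

Lemma iscf_cons n B : 0 < n ->
  iscf n (0 :: B) <-> uniq B /\ (forall y, (y \in B) = (0 < y < n)).
Proof.
move=> Hn; rewrite /iscf /= andbT; split.
- move=> Hp; have Hu : uniq (0 :: B) by rewrite (perm_uniq Hp) iota_uniq.
  case/andP: Hu => H0 Hu; split => // y.
  have := perm_mem Hp y; rewrite inE mem_iota add0n /=.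
  case: (posnP y) => [->|Hy]; first by rewrite (negbTE H0).
  by move=> /= ->.
- move=> [Hu Hm]; apply: uniq_perm; rewrite ?iota_uniq //=.
  + by rewrite Hm ltnn Hu.
  + move=> y; rewrite inE Hm mem_iota add0n; case: (posnP y) => [->|Hy] /=; first by rewrite Hn.
    by [].
Qed.

Lemma iscf_size n c : iscf n c -> size c = n.
Proof. by case/andP => Hp _; rewrite (perm_size Hp) size_iota. Qed.

Lemma OLs_mem n c x : iscf n c -> (x \in OLs c) = (x < n).
Proof. by move=> H; rewrite (perm_mem (OLs_perm H)) mem_iota add0n. Qed.

Definition glue m (sg tu : seq nat) := 0 :: m :: (map (addn m) (behead tu) ++ drop 2 sg).

Section GS.
Variables (n k m : nat) (S B' : seq nat).
Hypotheses (Hm : 0 < m) (Hmn : m < n) (HSu : uniq S) (HSm : forall x, (x \in S) = (0 < x < m))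
  (HBu : uniq B') (HBm : forall y, (y \in B') = (0 < y < n - m)).

Lemma iscf_sg : iscf m.+1 (0 :: m :: S).
Proof.
apply/iscf_cons => //; split.
- by rewrite /= HSu HSm ltnn andbF.
- by move=> y; rewrite inE HSm; case: (ltngtP y m) => Hy; lia.
Qed.

Lemma iscf_tu : iscf (n - m) (0 :: B').
Proof. by apply/iscf_cons; [lia | split]. Qed.

Lemma iscf_glue : iscf n (glue m (0 :: m :: S) (0 :: B')).
Proof.
rewrite /glue /= drop0; apply/iscf_cons; first lia; split.
- rewrite /= mem_cat negb_or cat_uniq HSu andbT map_inj_uniq ?HBu; last exact: addnI.
  rewrite HSm ltnn andbF /= andbT; apply/andP; split.
  + by apply/mapP => -[y Hy E]; move: Hy; rewrite HBm; lia.
  + apply/hasPn => x; rewrite HSm => Hx; apply/mapP => -[y Hy E]; subst x.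
    move: Hy; rewrite HBm; lia.
- move=> y; rewrite inE mem_cat HSm; apply/idP/idP.
  + case/orP => [/eqP ->|/orP [/mapP [z Hz ->]|]]; [lia | move: Hz; rewrite HBm; lia | lia].
  + move=> Hy; case: (ltngtP y m) => Hym.
    * by case/andP: Hy => -> _; rewrite !orbT.
    * apply/orP; right; apply/orP; left; apply/mapP; exists (y - m); last lia.
      by rewrite HBm; lia.
    * by [].
Qed.

Lemma sizeS : size S = m.-1.
Proof. have := iscf_size iscf_sg; rewrite /=; lia. Qed.

Lemma sizeB : size B' = (n - m).-1.
Proof. have := iscf_size iscf_tu; rewrite /=; lia. Qed.

Lemma good_glue : goodseq k (glue m (0 :: m :: S) (0 :: B')) =
  goodseq k (0 :: m :: S) && goodseq k (0 :: B').
Proof.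
rewrite /goodseq /glue /= drop0.
set c := 0 :: m :: _.
have EO : OLs c = map (succ (0 :: m :: S)) (iota 0 m) ++
    map (hh m (succ (0 :: m :: S) m)) (OLs (0 :: B')).
  apply: OLs_glue.
  - exact: Hm.
  - by move=> x; rewrite HSm.
  - by move=> y; rewrite HBm; lia.
  - by move=> x Hx; rewrite HSm.
  - by move=> y Hy; rewrite HBm; have := sizeB; lia.
  - exact: sizeS.
have Esg : OLs (0 :: m :: S) = rcons (map (succ (0 :: m :: S)) (iota 0 m)) (succ (0 :: m :: S) m).
  rewrite /OLs (_ : size (0 :: m :: S) = m + 1); last by rewrite /= sizeS; lia.
  by rewrite iotaD map_cat cats1.
have C1 : all (fun x => x <= m) (map (succ (0 :: m :: S)) (iota 0 m)).
  apply/allP => x /mapP [y Hy ->].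
  have : succ (0 :: m :: S) y \in OLs (0 :: m :: S).
    by rewrite /OLs map_f // mem_iota; move: Hy; rewrite mem_iota /= sizeS; lia.
  by rewrite (OLs_mem _ iscf_sg); lia.
have C2 : succ (0 :: m :: S) m <= m.
  have : succ (0 :: m :: S) m \in OLs (0 :: m :: S) by rewrite /OLs map_f // mem_iota /= sizeS; lia.
  by rewrite (OLs_mem _ iscf_sg); lia.
have C3 : 0 \in OLs (0 :: B') by rewrite (OLs_mem _ iscf_tu); lia.
have HD : avoids (delta k) (OLs c) = avoids (delta k) (OLs (0 :: m :: S)) && avoids (delta k) (OLs (0 :: B')).
  rewrite /avoids -negb_or; congr negb; apply/idP/idP.
  - move/cDP; rewrite EO cD_glue // -Esg.
    by case=> /cDP ->; rewrite ?orbT.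
  - case/orP => /cDP H; apply/cDP; rewrite EO cD_glue // -Esg; by [left | right].
have HB2 : forall u, u \in map (addn m) B' -> m < u.
  by move=> u /mapP [y]; rewrite HBm => Hy ->; lia.
have HS2 : forall u, u \in S -> u < m by move=> u; rewrite HSm; lia.
have E1 : c213 c <-> c213 B' \/ c213 S.
  rewrite /c c213_head2; last by move=> y z _; lia.
  rewrite c213_head2; last first.
    move=> y z /subseq_catP [t1 [t2 [Et [H1 H2]]]].
    case: t1 Et H1 => [|a [|b [|d t1]]] //= Et H1.
    + have : z \in S by apply: (mem_subseq H2); rewrite -Et !inE eqxx orbT.
      by move/HS2; lia.
    + case: Et => -> Et; have := HB2 _ (mem_subseq H1 (mem_head _ _)); lia.
    + case: Et => -> _ _; have := HB2 _ (mem_subseq H1 (mem_head _ _)); lia.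
  by rewrite (c213_cat HB2 HS2) c213_map.
have E2 : c213 (0 :: m :: S) <-> c213 S.
  rewrite c213_head2; last by move=> y z _; lia.
  rewrite c213_head2 // => y z Hs; have : z \in S.
    by apply: (mem_subseq Hs); rewrite !inE eqxx orbT.
  by move/HS2; lia.
have E3 : c213 (0 :: B') <-> c213 B' by rewrite c213_head2 // => y z _; lia.
have H213 : avoids pat213 c = avoids pat213 (0 :: m :: S) && avoids pat213 (0 :: B').
  rewrite /avoids -negb_or; congr negb; apply/idP/idP.
  - by move/c213P/E1 => -[H|H]; apply/orP; [right|left]; apply/c213P; [apply/E3|apply/E2].
  - by case/orP => /c213P H; apply/c213P/E1; [right; apply/E2|left; apply/E3].
by rewrite HD H213 -!andbA; congr andb; rewrite andbCA.
Qed.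
End GS.

Section Count.
Variables (n k m : nat).
Hypotheses (Hm : 0 < m) (Hmn : m < n).

Definition Xp c := iscf n c && goodseq k c && (nth 0 c 1 == m).
Definition Yp (sg : seq nat) := iscf m.+1 sg && goodseq k sg && (nth 0 sg 1 == m).
Definition Zp (tu : seq nat) := iscf (n - m) tu && goodseq k tu.

Lemma Y_struct sg : Yp sg -> sg = 0 :: m :: drop 2 sg /\ uniq (drop 2 sg) /\
  forall x, (x \in drop 2 sg) = (0 < x < m).
Proof.
case/andP => /andP [Hc _] /eqP H1.
have Hs := iscf_size Hc.
case: sg Hc Hs H1 => [|a [|b S]] Hc Hs H1; try by (move: Hs H1 => /= Hs H1; lia).
move: H1 => /= H1; subst b.
have Ha : a = 0 by case/andP: Hc => _ /eqP.
subst a; move/iscf_cons: Hc => /(_ isT) [/andP [HmS HSu] HSm].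
rewrite /= drop0; split => //; split => // x.
have := HSm x; rewrite inE; case: (eqVneq x m) => [->|Hx] /=.
- by rewrite (negbTE HmS); lia.
- by move=> ->; apply/idP/idP; move: Hx => /eqP; lia.
Qed.

Lemma Z_struct tu : Zp tu -> tu = 0 :: behead tu /\ uniq (behead tu) /\
  forall y, (y \in behead tu) = (0 < y < n - m).
Proof.
case/andP => Hc _; have Hs := iscf_size Hc.
case: tu Hc Hs => [|a B] Hc Hs; first by move: Hs => /=; lia.
have Ha : a = 0 by case/andP: Hc => _ /eqP.
subst a; move/iscf_cons: Hc => /(_ _) [|HBu HBm]; first lia.
by [].
Qed.

Lemma glue_X sg tu : Yp sg -> Zp tu -> Xp (glue m sg tu).
Proof.
move=> HY HZ.
have [Esg [HSu HSm]] := Y_struct HY.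
have [Etu [HBu HBm]] := Z_struct HZ.
move: HY HZ; rewrite Esg Etu => /andP [/andP [_ G1] _] /andP [_ G2].
rewrite /Xp; apply/andP; split; last by [].
rewrite (iscf_glue (n := n)) //= (good_glue (n := n)) //; by rewrite G1 G2.
Qed.

Lemma glue_inj sg tu sg' tu' : Yp sg -> Zp tu -> Yp sg' -> Zp tu' ->
  glue m sg tu = glue m sg' tu' -> sg = sg' /\ tu = tu'.
Proof.
move=> HY HZ HY' HZ'.
have [Esg [HSu HSm]] := Y_struct HY.
have [Etu [HBu HBm]] := Z_struct HZ.
have [Esg' [HSu' HSm']] := Y_struct HY'.
have [Etu' [HBu' HBm']] := Z_struct HZ'.
have Hsz : size (behead tu) = size (behead tu').
  by rewrite (sizeB (n:=n) (m:=m) (S := drop 2 sg) (B' := behead tu)) //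
     (sizeB (n:=n) (m:=m) (S := drop 2 sg') (B' := behead tu')).
rewrite /glue => -[] /eqP; rewrite eqseq_cat ?size_map // => /andP [/eqP E1 /eqP E2].
split; first by rewrite Esg Esg' E2.
by rewrite Etu Etu' (inj_map (@addnI m) E1).
Qed.

Lemma X_glue c : Xp c -> exists sg tu, [/\ Yp sg, Zp tu & c = glue m sg tu].
Proof.
case/andP => /andP [Hc Hg] /eqP H1.
have Hs := iscf_size Hc.
case: c Hc Hs H1 Hg => [|a [|b r]] Hc Hs H1 Hg; try by (move: Hs H1 => /= Hs H1; lia).
move: H1 => /= H1; subst b.
have Ha : a = 0 by case/andP: Hc => _ /eqP.
subst a; move/iscf_cons: (Hc) => /(_ _) [|/andP [Hmr Hru] Hrm]; first lia.
have Hr : forall x, (x \in r) = (0 < x < n) && (x != m).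
  move=> x; have := Hrm x; rewrite inE; case: (eqVneq x m) => [->|Hx] /=.
  - by rewrite (negbTE Hmr) andbF.
  - by move=> ->; rewrite andbT.
have Hnc : ~ c213 (m :: r).
  move=> H; move: Hg => /andP [_ /negP]; apply; apply/c213P.
  exact: c213_sub (subseq_cons _ _) H.
have Er := c213_split Hmr Hnc.
set B := filter _ r in Er; set S := filter _ r in Er.
set B' := map (subn^~ m) B.
have EB : map (addn m) B' = B.
  rewrite /B' -map_comp -{2}(map_id B); apply/eq_in_map => x.
  by rewrite mem_filter => /andP [Hx _] /=; lia.
have HSu : uniq S by rewrite filter_uniq.
have HSm : forall x, (x \in S) = (0 < x < m).
  move=> x; rewrite mem_filter Hr; apply/idP/idP.
  - by move=> /andP [Hx /andP [/andP [Hx0 _] _]]; rewrite Hx0 Hx.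
  - by move=> /andP [Hx0 Hx]; rewrite Hx Hx0 /=; apply/andP; split; lia.
have HBu : uniq B'.
  rewrite map_inj_in_uniq ?filter_uniq // => x y.
  by rewrite !mem_filter => /andP [Hx _] /andP [Hy _] /=; lia.
have HBm : forall y, (y \in B') = (0 < y < n - m).
  move=> y; apply/idP/idP.
  - move=> /mapP [x]; rewrite mem_filter Hr => /andP [Hx /andP [/andP [_ Hxn] _]] ->; lia.
  - move=> Hy; apply/mapP; exists (y + m); last lia.
    rewrite mem_filter Hr; apply/andP; split; first lia.
    by apply/andP; split; lia.
have Ec : 0 :: m :: r = glue m (0 :: m :: S) (0 :: B') by rewrite /glue /= drop0 EB -Er.
have Hgg := Hg; rewrite Ec (good_glue (n := n)) // in Hgg; case/andP: Hgg => G1 G2.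
exists (0 :: m :: S), (0 :: B'); split => //.
- by rewrite /Yp (iscf_sg (n := n) (B' := B')) // G1 /= eqxx.
- by rewrite /Zp (iscf_tu (S := S)) // G2.
Qed.

End Count.

Section Perm.
Variable n' : nat.
Local Notation n := n'.+1.

Lemma cf_eq (s : 'S_n) : cycle_form s = map val (traject s ord0 n).
Proof. by []. Qed.

Lemma cyc_card (s : 'S_n) : cyclic_perm s -> #|porbit s ord0| = n.
Proof. by move=> H; apply/eqP; exact: forallP H ord0. Qed.

Lemma cyc_all (s : 'S_n) : cyclic_perm s -> forall x, x \in traject s ord0 n.
Proof.
move=> H x; have Hu := uniq_traject_porbit s ord0; rewrite cyc_card // in Hu.
have Hc : #|mem (traject s ord0 n)| = #|[pred _ : 'I_n | true]|.
  by rewrite (card_uniqP Hu) size_traject card_ord.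
have := subset_cardP Hc; rewrite subset_predT => /(_ isT) E.
by rewrite E.
Qed.

Lemma cyc_iter (s : 'S_n) : cyclic_perm s -> iter n s ord0 = ord0.
Proof. by move=> H; have := iter_porbit s ord0; rewrite cyc_card. Qed.

Lemma cyc_iscf (s : 'S_n) : cyclic_perm s -> iscf n (cycle_form s).
Proof.
move=> H; rewrite /iscf cf_eq; apply/andP; split; last by [].
have Hu := uniq_traject_porbit s ord0; rewrite cyc_card // in Hu.
apply: uniq_perm; first by rewrite (map_inj_uniq val_inj).
  by rewrite iota_uniq.
move=> y; rewrite mem_iota add0n; apply/idP/idP.
- by case/mapP => x _ ->; exact: ltn_ord.
- move=> Hy; apply/mapP; exists (Ordinal Hy) => //; exact: cyc_all.
Qed.

Lemma cyc_succ (s : 'S_n) : cyclic_perm s ->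
  forall x : 'I_n, val (s x) = succ (cycle_form s) (val x).
Proof.
move=> H x; have Hx := cyc_all H x.
set i := index x (traject s ord0 n).
have Hi : i < n by rewrite -(size_traject s ord0 n) index_mem.
have Ex : x = iter i s ord0.
  by rewrite -(nth_traject s Hi) nth_index.
rewrite cf_eq /succ index_map; last exact: val_inj.
rewrite -map_rot.
have -> : rot 1 (traject s ord0 n) = traject s (s ord0) n.
  rewrite [traject _ _ n]/= rot1_cons trajectSr -iterSr cyc_iter //.
rewrite (nth_map (s ord0)) ?size_traject // -/i nth_traject //.
by rewrite -iterSr iterS -Ex.
Qed.

Lemma one_line_cyc (s : 'S_n) : cyclic_perm s -> one_line s = OLs (cycle_form s).
Proof.
move=> H; rewrite /one_line /OLs (iscf_size (cyc_iscf H)) -val_enum_ord -[RHS]map_comp.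
by apply: eq_map => x /=; rewrite cyc_succ.
Qed.

Lemma good_cyc k (s : 'S_n) : good k s = cyclic_perm s && goodseq k (cycle_form s).
Proof.
rewrite /good /goodseq; case H: (cyclic_perm s) => //=.
by rewrite one_line_cyc.
Qed.


Lemma succ_lt c x : iscf n c -> x < n -> succ c x < n.
Proof.
move=> Hc Hx; rewrite -(OLs_mem _ Hc) /OLs (iscf_size Hc) map_f //.
by rewrite mem_iota.
Qed.

Lemma iscf_uniq m c : iscf m c -> uniq c.
Proof. by case/andP => Hp _; rewrite (perm_uniq Hp) iota_uniq. Qed.

Lemma iscf_mem m c x : iscf m c -> (x \in c) = (x < m).
Proof. by case/andP => Hp _; rewrite (perm_mem Hp) mem_iota. Qed.

Lemma succ_inj c x y : iscf n c -> x < n -> y < n -> succ c x = succ c y -> x = y.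
Proof.
move=> Hc Hx Hy; rewrite /succ => /eqP.
have Hu := iscf_uniq Hc.
rewrite -(iscf_mem x Hc) in Hx; rewrite -(iscf_mem y Hc) in Hy.
rewrite nth_uniq ?size_rot ?index_mem ?rot_uniq // => /eqP E.
by rewrite -(nth_index 0 Hx) E nth_index.
Qed.

Lemma iscf_perm c : iscf n c -> exists s : 'S_n, cyclic_perm s /\ cycle_form s = c.
Proof.
move=> Hc.
have Hs0 : nth 0 c 0 = 0.
  by move: Hc; rewrite /iscf; case: c => [|a r] //= /andP [_ /eqP].
pose f (x : 'I_n) : 'I_n := inord (succ c x).
have Hf : forall x, val (f x) = succ c x by move=> x; apply: inordK; exact: succ_lt.
have finj : injective f.
  move=> x y /(congr1 val); rewrite !Hf => /(succ_inj Hc (ltn_ord x) (ltn_ord y)).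
  exact: val_inj.
pose s := perm finj.

have Hsz := iscf_size Hc.
have Hit : forall i, i < n -> val (iter i s ord0) = nth 0 c i.
  elim=> [|i IH] Hi; first by rewrite Hs0.
  rewrite iterS permE Hf IH; last lia.
  rewrite /succ index_uniq ?Hsz ?(iscf_uniq Hc) //; last lia.
  rewrite /rot nth_cat size_drop Hsz.
  have -> : i < n - 1 by lia.
  by rewrite nth_drop add1n.
have Hcf : cycle_form s = c.
  rewrite cf_eq; apply: (@eq_from_nth _ 0); first by rewrite size_map size_traject Hsz.
  move=> i; rewrite size_map size_traject => Hi.
  by rewrite (nth_map ord0) ?size_traject // nth_traject // Hit.
have Hall : forall y : 'I_n, y \in porbit s ord0.
  move=> y; have Hy : val y \in c by rewrite (iscf_mem _ Hc); exact: ltn_ord.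
  have Hi : index (val y) c < n by move: Hy; rewrite -index_mem Hsz.
  have -> : y = (s ^+ (index (val y) c))%g ord0.
    by apply: val_inj; rewrite permX Hit // nth_index.
  exact: mem_porbit.
exists s; split => //.
apply/forallP => x; apply/eqP.
have -> : porbit s x = porbit s ord0 by apply/eqP; rewrite eq_porbit_mem.
have -> : porbit s ord0 = [set: 'I_n] by apply/setP => y; rewrite inE Hall.
by rewrite cardsT card_ord.
Qed.

Lemma CF k (R : pred (seq nat)) : exists L, [/\ uniq L,
  forall c, (c \in L) = [&& iscf n c, goodseq k c & R c] &
  #|[set s : 'S_n | good k s && R (cycle_form s)]| = size L].
Proof.
set A := [set s : 'S_n | _].
exists (map (@cycle_form n) (enum A)); split.
- rewrite map_inj_in_uniq ?enum_uniq // => s1 s2.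
  rewrite !mem_enum !inE !good_cyc => /andP [/andP [H1 _] _] /andP [/andP [H2 _] _] E.
  apply/permP => x; apply: val_inj; by rewrite !cyc_succ // E.
- move=> c; apply/idP/idP.
  + case/mapP => s; rewrite mem_enum inE good_cyc => /andP [/andP [H1 H2] H3] ->.
    by rewrite cyc_iscf // H2 H3.
  + case/and3P => H1 H2 H3; have [s [Hs Ec]] := iscf_perm H1.
    apply/mapP; exists s => //; rewrite mem_enum inE good_cyc Hs Ec H2 H3.
    by [].
- by rewrite cardE size_map.
Qed.
End Perm.

Lemma class_count n' k m : 0 < m < n'.+2 ->
  #|[set s : 'S_n'.+2 | good k s && (nth 0 (cycle_form s) 1 == m)]| =
  b_nk m.+1 k * a_nk (n'.+2 - m) k.
Proof.
case: m => [|m'] // /andP [_ Hmn].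
set N := n'.+2.
have [LX [HXu HXm ->]] := CF n'.+1 k (fun c => nth 0 c 1 == m'.+1).
have [LY [HYu HYm EY]] := CF m'.+1 k (fun c => nth 0 c 1 == m'.+1).
have Eb : b_nk m'.+2 k = size LY by rewrite -EY.
have EN : N - m'.+1 = (N - m'.+1).-1.+1 by rewrite /N; lia.
have [LZ [HZu HZm EZ]] := CF (N - m'.+1).-1 k predT.
have Ea : a_nk (N - m'.+1) k = size LZ.
  rewrite -EZ /a_nk EN; apply: eq_card => s; by rewrite !inE andbT.
rewrite Eb Ea -(size_allpairs (glue m'.+1)).
have Hm : 0 < m'.+1 by [].
have HYp : forall c, (c \in LY) = Yp k m'.+1 c by move=> c; rewrite HYm /Yp andbA.
have HZp : forall c, (c \in LZ) = Zp N k m'.+1 c by move=> c; rewrite HZm /Zp -EN andbT.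
have HXp : forall c, (c \in LX) = Xp N k m'.+1 c by move=> c; rewrite HXm /Xp andbA.
apply: perm_size; apply: uniq_perm => //.
- apply: allpairs_uniq => // -[s1 t1] [s2 t2] /allpairsP [[x1 y1] /= [Hx1 Hy1 E1]]
    /allpairsP [[x2 y2] /= [Hx2 Hy2 E2]]; case: E1 => -> ->; case: E2 => -> -> /= E.
  rewrite HYp in Hx1; rewrite HYp in Hx2; rewrite HZp in Hy1; rewrite HZp in Hy2.
  by have [-> ->] := glue_inj Hm Hmn Hx1 Hy1 Hx2 Hy2 E.
- move=> c; rewrite HXp; apply/idP/idP.
  + move/(X_glue Hm Hmn) => [sg [tu [Hs Ht ->]]].
    by apply/allpairsP; exists (sg, tu); rewrite HYp HZp.
  + case/allpairsP => -[sg tu] /= [Hs Ht ->]; rewrite HYp in Hs; rewrite HZp in Ht.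
    exact: glue_X.
Qed.

Theorem lemma2p2 (n k : nat) : 2 <= n -> 3 <= k ->
  a_nk n k = \sum_(2 <= j < n.+1) b_nk j k * a_nk (n.+1 - j) k.
Proof.
case: n => [|[|n']] // _ _.
have E1 : a_nk n'.+2 k = \sum_(j < n'.+2)
    #|[set s : 'S_n'.+2 | good k s && (nth 0 (cycle_form s) 1 == j)]|.
  rewrite /a_nk -sum1_card (partition_big (fun s : 'S_n'.+2 => s ord0) predT) //=.
  apply: eq_bigr => j _; rewrite -sum1_card; apply: eq_bigl => s; rewrite !inE.
  by [].
have E0 : #|[set s : 'S_n'.+2 | good k s && (nth 0 (cycle_form s) 1 == 0)]| = 0.
  have [L [Hu HL ->]] := CF n'.+1 k (fun c => nth 0 c 1 == 0).
  case: L Hu HL => [|c L] // _ HL.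
  have := HL c; rewrite mem_head => /esym /and3P [Hc _ /eqP H1].
  have Hs := iscf_size Hc; have Hu := iscf_uniq Hc.
  case/andP: Hc => _ /eqP H0.
  case: c Hs Hu H0 H1 {HL} => [|a [|b r]] //= _ /andP [Ha _] H0 H1.
  by move: Ha; rewrite inE H0 H1 eqxx.
rewrite E1 -(big_mkord xpredT (fun j => #|[set s : 'S_n'.+2 | good k s && (nth 0 (cycle_form s) 1 == j)]|)).
rewrite big_ltn // E0 add0n [RHS]big_add1 /=.
apply: eq_big_nat => i Hi.
by rewrite class_count // subSS.
Qed.
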